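(* Let $\mathcal F=\{K_4,C_5,C_6,C_7,B_5\}$ and let $G$ be an $\mathcal F$-free graph. If $G$ contains one of the configurations (C1)–(C13) below, and $H$ is the subgraph of $G$ induced by the vertices of that configuration, then $H$ is $(\mathcal F,4)$-boundary-reducible in $G$ with reduced part $R=V(H)\setminus B$, where $B$ is the boundary specified for the configuration (empty if none is specified). (C1) a vertex of degree at most $2$. (C2) three $3$-vertices $u,v,w$ with $uv,vw\in E(G)$. (C3) a triangle all of whose vertices are $3$-vertices. (C4) a diamond $D=\mathrm{Dia}(4-3,4,5^+)$ together with a $3$-vertex $u\notin V(D)$ adjacent to the middle $4$-vertex of $D$; boundary: the side $5^+$-vertex of $D$. (C5) $\mathrm{Dia}(3-3,5^+,5^+)$; boundary: its two side vertices. (C6) $\mathrm{Dia}(3-5^+,3,5^+)$; boundary: its middle $5^+$-vertex and its side $5^+$-vertex. (C7) $\mathrm{Dia}(5-4,3,3)$. (C8) $D_1=\mathrm{Dia}(4-4,5,3)$ and $D_2=\mathrm{Dia}(5-3,4,4^+)$, where the side $5$-vertex of $D_1$ is the middle $5$-vertex of $D_2$; $D_2$ has side vertices $s$ (a $4$-vertex) and $v$ (a $4^+$-vertex); boundary: $v$. (C9) two diamonds $D_1,D_2$, each $\mathrm{Dia}(3-4,4,5^+)$, such that the middle $4$-vertex of $D_1$ is adjacent to the middle $4$-vertex of $D_2$; boundary: the side $5^+$-vertices of $D_1$ and $D_2$. (C10) $D_1=\mathrm{Dia}(4-3,5^+,5)$ with side vertices $p$ (a $5^+$-vertex) and $q$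 (a $5$-vertex), and $D_2=\mathrm{Dia}(5-3,4,4^+)$ whose middle $5$-vertex is $q$, with side vertices a $4$-vertex and a $4^+$-vertex $v$; boundary: $p$ and $v$. (C11) $\mathrm{Dia}(4-4,3,4)$ together with a $3$-vertex outside it adjacent to one of its middle $4$-vertices. (C12) $D_1=\mathrm{Dia}(3-4,4,5^+)$ and $D_2=\mathrm{Dia}(4-4,4,3)$, where the middle $4$-vertex of $D_1$ is adjacent to a middle $4$-vertex of $D_2$; boundary: the side $5^+$-vertex of $D_1$. (C13) $D_1=\mathrm{Dia}(3-5,5,5)$ and $D_2,D_3$, each $\mathrm{Dia}(5-3,4,5^+)$, where the two side vertices of $D_1$ are the middle $5$-vertices of $D_2$ and of $D_3$, respectively; boundary: the side $5^+$-vertices of $D_2$ and $D_3$.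
   Context: $B_5$ is the book on $5$ vertices: an edge $xy$ plus three further vertices each adjacent to exactly $x$ and $y$. $\mathcal F$-free graph: no subgraph isomorphic to a member of $\mathcal F$. All degrees are degrees in $G$; a $d$-vertex ($d^+$-vertex) is a vertex of degree exactly $d$ (at least $d$). A diamond is a subgraph isomorphic to $K_4$ minus an edge; its two vertices of degree $3$ in it are middle vertices, the other two are side vertices. $\mathrm{Dia}(a-b,c,d)$ denotes a diamond whose middle vertices have degrees $a,b$ and whose side vertices have degrees $c,d$; an entry $s^+$ means degree at least $s$. Vertices of distinct pieces of a configuration are distinct except where explicitly identified. For an induced subgraph $H$ of $G$ and $\emptyset\neq R\subseteq V(H)$, $\deg_R(v)$ is the degree of $v$ in $G[R]$. A set $I\subseteq V(H)$ is $\mathcal F$-free if adding to $H$ a new vertex adjacent exactly to $I$ creates no subgraph isomorphic to a member of $\mathcal F$. For $f:R\to\mathbb Z$, an $f$-assignment is a list assignment $L$ on $R$ with $|L(v)|\ge f(v)$; $f\downarrow v$ is $f$ changed to value $1$ at $v$; $1_I$ is the indicator of $I$. $H$ is $(\mathcal F,k)$-boundary-reducible in $G$ with reduced part $R$ if (FIX) for every $v\in R$, $H[R]$ is properly $L$-colorable for every $((k-\deg_G+\deg_R)\downarrow v)$-assignment $L$, and (FORB) for every $\mathcal F$-free $I\subseteq R$ with $|I|\le k-2$, $H[R]$ is properly $L$-colorable for every $(k-\deg_G+\deg_R-1_I)$-assignment $L$. *)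

(* Defs.v *)
(* Finite simple graphs as symmetric irreflexive relations on a finType. *)
From mathcomp Require Import all_boot all_algebra.
Set Implicit Arguments. Unset Strict Implicit. Unset Printing Implicit Defensive.
Import GRing.Theory Num.Theory.

Definition contains_sub (X : finType) (W : {set X}) (r : rel X) (n : nat)
  (P : rel 'I_n) : Prop :=
  exists f : 'I_n -> X,
    injective f /\ (forall i, f i \in W) /\ (forall i j, P i j -> r (f i) (f j)).

Definition K4_rel : rel 'I_4 := fun i j => i != j.
Definition cycle_rel (k : nat) : rel 'I_k :=
  fun i j => (val j == (val i).+1 %% k) || (val i == (val j).+1 %% k).
(** B_5: vertices 0 = x, 1 = y, and 2,3,4 adjacent to both x and y. *)
Definition book5_rel : rel 'I_5 := fun i j =>
  [|| (val i == 0) && (val j == 1), (val i == 1) && (val j == 0),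
      (val i <= 1) && (2 <= val j) | (val j <= 1) && (2 <= val i)].

Definition F_free (X : finType) (W : {set X}) (r : rel X) : Prop :=
  ~ contains_sub W r K4_rel /\ ~ contains_sub W r (@cycle_rel 5) /\
  ~ contains_sub W r (@cycle_rel 6) /\ ~ contains_sub W r (@cycle_rel 7) /\
  ~ contains_sub W r book5_rel.

Section Defs.
Variable T : finType.
Implicit Types (e : rel T) (R S I B : {set T}).

Definition deg e (v : T) : nat := #|[set u | e v u]|.
Definition degR e R (v : T) : nat := #|[set u in R | e v u]|.

(** H = G[S] plus a new vertex (None) adjacent exactly to I. *)
Definition ext_vset S : {set option T} := None |: [set Some v | v in S].
Definition ext_rel S I e : rel (option T) := fun x y =>
  match x, y with
  | Some u, Some v => e u v
  | None, Some v => v \in I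
  | Some u, None => u \in I
  | None, None => false
  end.

Definition colorable e R (L : T -> seq nat) : Prop :=
  exists c : T -> nat, (forall v, v \in R -> c v \in L v) /\
    (forall u v, u \in R -> v \in R -> e u v -> c u != c v).

Definition is_fassign R (f : T -> int) (L : T -> seq nat) : Prop :=
  forall v, v \in R -> (f v <= (size (undup (L v)))%:Z)%R.

Definition bval (k : nat) e R (v : T) : int :=
  (k%:Z - (deg e v)%:Z + (degR e R v)%:Z)%R.

Definition boundary_reducible
  (Fam : forall X : finType, {set X} -> rel X -> Prop) (k : nat) e S R : Prop :=
  [/\ R \subset S, R != set0,
   (forall v, v \in R -> forall L,
      is_fassign R (fun u => if u == v then 1%R else bval k e R u) L ->
      colorable e R L) &
   (forall I, I \subset R -> Fam _ (ext_vset S) (ext_rel S I e) -> #|I| <= k - 2 ->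
      forall L, is_fassign R (fun u => bval k e R u - (nat_of_bool (u \in I))%:Z)%R L ->
      colorable e R L)].

(** Degree specifications: exactly n, or at least n (written n^+). *)
Inductive dspec := Ex of nat | AL of nat.
Definition dsat e (v : T) (s : dspec) : Prop :=
  match s with Ex n => deg e v = n | AL n => n <= deg e v end.

(** Diamond with middle vertices m1 m2 and side vertices s1 s2. *)
Definition diamond e (m1 m2 s1 s2 : T) : Prop :=
  uniq [:: m1; m2; s1; s2] /\ e m1 m2 /\ e m1 s1 /\ e m1 s2 /\ e m2 s1 /\ e m2 s2.
(** Dia(a-b,c,d) with middle m1 (deg a), m2 (deg b), sides s1 (deg c), s2 (deg d). *)
Definition Dia e (a b c d : dspec) (m1 m2 s1 s2 : T) : Prop :=
  diamond e m1 m2 s1 s2 /\ dsat e m1 a /\ dsat e m2 b /\ dsat e s1 c /\ dsat e s2 d.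

(** Configurations: S = vertex set, B = boundary. *)
Definition C1 e S B := exists v, deg e v <= 2 /\ S = [set v] /\ B = set0.
Definition C2 e S B := exists u v w, uniq [:: u; v; w] /\
  deg e u = 3 /\ deg e v = 3 /\ deg e w = 3 /\ e u v /\ e v w /\
  S = [set u; v; w] /\ B = set0.
Definition C3 e S B := exists u v w, uniq [:: u; v; w] /\
  deg e u = 3 /\ deg e v = 3 /\ deg e w = 3 /\ e u v /\ e v w /\ e u w /\
  S = [set u; v; w] /\ B = set0.
Definition C4 e S B := exists m1 m2 s1 s2 u,
  Dia e (Ex 4) (Ex 3) (Ex 4) (AL 5) m1 m2 s1 s2 /\ uniq [:: m1; m2; s1; s2; u] /\
  deg e u = 3 /\ e u m1 /\ S = [set m1; m2; s1; s2; u] /\ B = [set s2].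
Definition C5 e S B := exists m1 m2 s1 s2,
  Dia e (Ex 3) (Ex 3) (AL 5) (AL 5) m1 m2 s1 s2 /\
  S = [set m1; m2; s1; s2] /\ B = [set s1; s2].
Definition C6 e S B := exists m1 m2 s1 s2,
  Dia e (Ex 3) (AL 5) (Ex 3) (AL 5) m1 m2 s1 s2 /\
  S = [set m1; m2; s1; s2] /\ B = [set m2; s2].
Definition C7 e S B := exists m1 m2 s1 s2,
  Dia e (Ex 5) (Ex 4) (Ex 3) (Ex 3) m1 m2 s1 s2 /\
  S = [set m1; m2; s1; s2] /\ B = set0.
Definition C8 e S B := exists a1 b1 x c1 m s v,
  Dia e (Ex 4) (Ex 4) (Ex 5) (Ex 3) a1 b1 x c1 /\
  Dia e (Ex 5) (Ex 3) (Ex 4) (AL 4) x m s v /\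
  uniq [:: a1; b1; x; c1; m; s; v] /\
  S = [set a1; b1; x; c1; m; s; v] /\ B = [set v].
Definition C9 e S B := exists p1 q1 r1 t1 p2 q2 r2 t2,
  Dia e (Ex 3) (Ex 4) (Ex 4) (AL 5) p1 q1 r1 t1 /\
  Dia e (Ex 3) (Ex 4) (Ex 4) (AL 5) p2 q2 r2 t2 /\ e q1 q2 /\
  uniq [:: p1; q1; r1; t1; p2; q2; r2; t2] /\
  S = [set p1; q1; r1; t1; p2; q2; r2; t2] /\ B = [set t1; t2].
Definition C10 e S B := exists a b p q m s v,
  Dia e (Ex 4) (Ex 3) (AL 5) (Ex 5) a b p q /\
  Dia e (Ex 5) (Ex 3) (Ex 4) (AL 4) q m s v /\
  uniq [:: a; b; p; q; m; s; v] /\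
  S = [set a; b; p; q; m; s; v] /\ B = [set p; v].
Definition C11 e S B := exists m1 m2 s1 s2 u,
  Dia e (Ex 4) (Ex 4) (Ex 3) (Ex 4) m1 m2 s1 s2 /\ uniq [:: m1; m2; s1; s2; u] /\
  deg e u = 3 /\ (e u m1 \/ e u m2) /\
  S = [set m1; m2; s1; s2; u] /\ B = set0.
Definition C12 e S B := exists p1 q1 r1 t1 a b c d,
  Dia e (Ex 3) (Ex 4) (Ex 4) (AL 5) p1 q1 r1 t1 /\
  Dia e (Ex 4) (Ex 4) (Ex 4) (Ex 3) a b c d /\ (e q1 a \/ e q1 b) /\
  uniq [:: p1; q1; r1; t1; a; b; c; d] /\
  S = [set p1; q1; r1; t1; a; b; c; d] /\ B = [set t1].
Definition C13 e S B := exists a b x y m2 s2 t2 m3 s3 t3,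
  Dia e (Ex 3) (Ex 5) (Ex 5) (Ex 5) a b x y /\
  Dia e (Ex 5) (Ex 3) (Ex 4) (AL 5) x m2 s2 t2 /\
  Dia e (Ex 5) (Ex 3) (Ex 4) (AL 5) y m3 s3 t3 /\
  uniq [:: a; b; x; y; m2; s2; t2; m3; s3; t3] /\
  S = [set a; b; x; y; m2; s2; t2; m3; s3; t3] /\ B = [set t2; t3].

Definition some_config e S B : Prop :=
  C1 e S B \/ C2 e S B \/ C3 e S B \/ C4 e S B \/ C5 e S B \/ C6 e S B \/ C7 e S B \/
  C8 e S B \/ C9 e S B \/ C10 e S B \/ C11 e S B \/ C12 e S B \/ C13 e S B.

End Defs.

(* Main.v *)
Require Import Defs.
From mathcomp Require Import all_boot all_algebra zify.
Set Implicit Arguments. Unset Strict Implicit. Unset Printing Implicit Defensive.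

Lemma int_fix (a b d : nat) : ((4%:Z - a%:Z + b%:Z <= d%:Z)%R) -> b + 4 <= d + a.
Proof. lia. Qed.

Lemma int_forb (a b c d : nat) : ((4%:Z - a%:Z + b%:Z - c%:Z <= d%:Z)%R) -> b + 4 <= d + a + c.
Proof. lia. Qed.

Lemma int_one (d : nat) : ((1 <= d%:Z)%R) -> 0 < d.
Proof. lia. Qed.

Lemma color_ext (T : finType) (e : rel T) (e_sym : symmetric e) (e_irr : irreflexive e)
  (R : {set T}) (x : T) (L : T -> seq nat) :
  x \in R -> colorable e (R :\ x) L ->
  #|[set u in R :\ x | e x u]| < size (undup (L x)) -> colorable e R L.
Proof.
move=> xR [c [cL cE]] Hlt.
set N := [set u in R :\ x | e x u].
set C := [seq c u | u <- enum N].
have : has (fun y => y \notin C) (undup (L x)).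
  apply/negPn/negP => /hasPn H.
  have := uniq_leq_size (undup_uniq (L x)) (fun y yin => negbNE (H y yin)).
  by rewrite size_map -cardE leqNgt Hlt.
case/hasP => col; rewrite mem_undup => colL colC.
exists (fun u => if u == x then col else c u); split.
  move=> v vR; case: eqP => [->|/eqP nvx]; first done.
  by apply: cL; rewrite !inE nvx vR.
move=> u v uR vR euv.
case: (eqVneq u x) => [eux|nux]; case: (eqVneq v x) => [evx|nvx].
- by subst; rewrite e_irr in euv.
- subst u; apply: contraNneq colC => ->; apply: map_f.
  by rewrite mem_enum !inE nvx vR euv.
- subst v; rewrite eq_sym; apply: contraNneq colC => ->; apply: map_f.
  by rewrite mem_enum !inE nux uR e_sym euv.
- by apply: cE => //; rewrite !inE ?nux ?nvx ?uR ?vR.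
Qed.

Definition kadj (E : seq (nat*nat)) (i j : nat) : bool := ((i,j) \in E) || ((j,i) \in E).

Definition okv (E : seq (nat*nat)) (D : seq nat) (fixo : option nat) (red : nat -> nat)
  (Rem removed : seq nat) (x : nat) : bool :=
  if fixo == Some x then size Rem == 1
  else nth 0 D x + red x <= 3 + count (kadj E x) removed.

Fixpoint greedy E D fixo red (fuel : nat) (Rem removed : seq nat) : bool :=
  match fuel with
  | 0 => nilp Rem
  | fuel'.+1 => nilp Rem ||
      (let x := nth 0 Rem (find (okv E D fixo red Rem removed) Rem) in
       has (okv E D fixo red Rem removed) Rem &&
       greedy E D fixo red fuel' (rem x Rem) (x :: removed))
  end.

Definition img (T : finType) (x0 : T) (vs : seq T) (s : seq nat) : {set T} :=
  [set u in [seq nth x0 vs i | i <- s]].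

Lemma colorable_img0 (T : finType) (e : rel T) x0 vs L : colorable e (@img T x0 vs [::]) L.
Proof. by exists (fun _ => 0); split => [v|u v]; rewrite inE. Qed.

Lemma greedy_sound (T : finType) (e : rel T) (e_sym : symmetric e) (e_irr : irreflexive e)
  (vs : seq T) (x0 : T) E D fixo (red : nat -> nat) (R : {set T}) (L : T -> seq nat)
  (Hu : uniq vs)
  (HE : forall i j, kadj E i j -> e (nth x0 vs i) (nth x0 vs j))
  (Hsz : forall i, i < size vs -> nth x0 vs i \in R ->
     if fixo == Some i then 0 < size (undup (L (nth x0 vs i)))
     else degR e R (nth x0 vs i) + 4 <= size (undup (L (nth x0 vs i))) + nth 0 D i + red i) :
  forall fuel Rem removed, uniq (Rem ++ removed) ->
  (forall i, i \in Rem ++ removed -> i < size vs /\ nth x0 vs i \in R) ->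
  greedy E D fixo red fuel Rem removed -> colorable e (img x0 vs Rem) L.
Proof.
have inj : forall i j, i < size vs -> j < size vs -> nth x0 vs i = nth x0 vs j -> i = j.
  by move=> i j il jl /eqP; rewrite nth_uniq // => /eqP.
elim=> [|fuel IH] Rem removed Hun Hin /=.
  by case: Rem Hun Hin => // _ _ _; apply: colorable_img0.
case/orP => [/nilP->|/andP [Hh]]; first exact: colorable_img0.
set x := nth 0 Rem _ => Hg.
have xRem : x \in Rem by rewrite /x mem_nth // -has_find.
have okx : okv E D fixo red Rem removed x by exact: nth_find.
clearbody x.
have P1 : perm_eq (Rem ++ removed) (x :: (rem x Rem ++ removed)).
  by rewrite -cat_cons perm_cat2r perm_to_rem.
have P2 : perm_eq (rem x Rem ++ x :: removed) (x :: (rem x Rem ++ removed)).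
  by apply/permPl; exact: (perm_catCA (rem x Rem) [:: x] removed).
have Hp : perm_eq (rem x Rem ++ x :: removed) (Rem ++ removed).
  by apply: perm_trans P2 _; rewrite perm_sym.
have Hc : colorable e (img x0 vs (rem x Rem)) L.
  apply: (IH (rem x Rem) (x :: removed)) Hg; first by rewrite (perm_uniq Hp).
  by move=> i; rewrite (perm_mem Hp); exact: Hin.
have [xl xR] : x < size vs /\ nth x0 vs x \in R by apply: Hin; rewrite mem_cat xRem.
have unRem : uniq Rem by move: Hun; rewrite cat_uniq => /and3P [].
have Hset : img x0 vs Rem :\ nth x0 vs x = img x0 vs (rem x Rem).
  apply/setP => u; rewrite !inE (rem_filter _ unRem).
  apply/andP/mapP.
    case=> nux /mapP [i iR Eu]; exists i; last exact: Eu.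
    rewrite mem_filter iR andbT /=.
    by apply: contraNneq nux => Ei; rewrite Eu Ei.
  case=> i; rewrite mem_filter => /andP [/= nix iR] ->; split; last exact: map_f.
  have il : i < size vs by case: (Hin i) => //; rewrite mem_cat iR.
  apply/negP => /eqP Heq; have H := inj _ _ il xl Heq; move: nix; by rewrite H /= eqxx.
apply: (@color_ext _ e e_sym e_irr _ (nth x0 vs x)).
- by rewrite inE map_f.
- by rewrite Hset.
move: okx; rewrite /okv; have := Hsz x xl xR; case: ifP => _.
  move=> Hpos /eqP Hs1.
  case: Rem xRem Hs1 {Hun Hin Hset P1 P2 Hp Hc Hg unRem Hh} => [|y [|]] //= xy _.
  rewrite inE in xy; move/eqP: xy => <-.
  apply: leq_trans Hpos; rewrite ltnS leqn0 cards_eq0; apply/eqP/setP => u.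
  by rewrite !inE; case: eqP => //= ->; rewrite eqxx.
move=> Hd Hok.
set X := nth x0 vs x.
set N := [set u in img x0 vs Rem :\ X | e X u].
set K := [set u in [seq nth x0 vs j | j <- removed & kadj E x j]].
have injin : {in [seq j <- removed | kadj E x j] &, injective (nth x0 vs)}.
  move=> i j; rewrite !mem_filter => /andP [_ iR] /andP [_ jR]; apply: inj.
  - by case: (Hin i) => //; rewrite mem_cat iR orbT.
  - by case: (Hin j) => //; rewrite mem_cat jR orbT.
have unrem : uniq removed by move: Hun; rewrite cat_uniq => /and3P [].
have cK : #|K| = count (kadj E x) removed.
  have Hu2 : uniq [seq nth x0 vs j | j <- removed & kadj E x j].
    by rewrite (map_inj_in_uniq injin) filter_uniq.
  by rewrite cardsE (card_uniqP Hu2) size_map size_filter.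
have dis : N :&: K = set0.
  apply/setP => u; rewrite in_set0; apply/negbTE/negP; rewrite inE => /andP [uN uK].
  move: uN; rewrite !inE => /andP [/andP [_ /mapP [i iR Eu]] _].
  move: uK; rewrite inE => /mapP [j]; rewrite mem_filter => /andP [_ jR] Eu'.
  have il : i < size vs by case: (Hin i) => //; rewrite mem_cat iR.
  have jl : j < size vs by case: (Hin j) => //; rewrite mem_cat jR orbT.
  have Eij : i = j by apply: inj => //; rewrite -Eu -Eu'.
  move: Hun; rewrite cat_uniq => /and3P [_ /hasP []]; exists j => //.
  by rewrite -Eij.
have sub : N :|: K \subset [set u in R | e X u].
  apply/subsetP => u; rewrite !inE => /orP [/andP [/andP [_ /mapP [i iR ->]] eXu]|].
    by rewrite eXu andbT; case: (Hin i) => //; rewrite mem_cat iR.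
  case/mapP => j; rewrite mem_filter => /andP [kj jR] ->.
  by rewrite HE // andbT; case: (Hin j) => //; rewrite mem_cat jR orbT.
have := subset_leq_card sub; rewrite cardsU dis cards0 subn0 cK -/(degR e R X) => Hdeg.
move: Hd; rewrite -/X -/N => Hd; lia.
Qed.

Definition kadjz n E (I : seq nat) a b :=
  if a == n then (b != n) && (b \in I) else if b == n then a \in I else kadj E a b.

Definition pat_ok k (P : nat -> nat -> bool) n E I (m : seq nat) :=
  [&& size m == k, uniq m, all (fun a => a <= n) m &
   all (fun a => all (fun b => P a b ==> kadjz n E I (nth 0 m a) (nth 0 m b)) (iota 0 k)) (iota 0 k)].

Lemma pat_sound (T : finType) (e : rel T) (vs : seq T) x0 n E (S : {set T})
  (Iidx : seq nat) (Iset : {set T}) k (P : rel 'I_k) (Pn : nat -> nat -> bool) m :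
  (forall a b : 'I_k, P a b -> Pn a b) ->
  uniq vs -> size vs = n -> (forall u, (u \in S) = (u \in vs)) ->
  (forall i j, kadj E i j -> e (nth x0 vs i) (nth x0 vs j)) ->
  (forall a, a \in Iidx -> nth x0 vs a \in Iset) ->
  pat_ok k Pn n E Iidx m -> contains_sub (ext_vset S) (ext_rel S Iset e) P.
Proof.
move=> HPn Hu Hn HS HE HI /and4P [/eqP sm um /allP mn HP].
have mlt : forall a : 'I_k, nth 0 m a != n -> nth 0 m a < size vs.
  move=> a; rewrite Hn ltn_neqAle => -> /=; apply: mn; apply: mem_nth; rewrite sm.
  exact: ltn_ord.
exists (fun a => if nth 0 m a == n then None else Some (nth x0 vs (nth 0 m a))).
split; [|split].
- move=> a b /=.
  have Hab : nth 0 m a = nth 0 m b -> a = b.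
    move/eqP; rewrite nth_uniq ?sm ?ltn_ord // => /eqP; exact: val_inj.
  case: ifP => Ha; case: ifP => Hb //.
  + by move=> _; apply: Hab; rewrite (eqP Ha) (eqP Hb).
  + have la := mlt a (negbT Ha); have lb := mlt b (negbT Hb).
    by move=> [] /eqP; rewrite nth_uniq // => /eqP; exact: Hab.
- move=> a; rewrite /ext_vset; case: ifP => Ha; rewrite !inE //.
  apply/orP; right; apply: imset_f; rewrite HS; apply: mem_nth; by apply: mlt; rewrite Ha.
- move=> a b Pab; have := allP HP a; rewrite mem_iota ltn_ord => /(_ isT) /allP /(_ b).
  rewrite mem_iota ltn_ord HPn //= /kadjz.
  move/(_ isT).
  case: (eqVneq (nth 0 m a) n) => Ha; case: (eqVneq (nth 0 m b) n) => Hb //=.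
  + by move/HI.
  + by move/HI.
  + exact: HE.
Qed.

Definition K4n (a b : nat) := a != b.
Definition cycn k (a b : nat) := (b == a.+1 %% k) || (a == b.+1 %% k).
Definition book5n (i j : nat) :=
  [|| (i == 0) && (j == 1), (i == 1) && (j == 0),
      (i <= 1) && (2 <= j) | (j <= 1) && (2 <= i)].

Definition cert_ok n E I (c : nat) m :=
  match c with
  | 0 => pat_ok 4 K4n n E I m
  | 1 => pat_ok 5 (cycn 5) n E I m
  | 2 => pat_ok 6 (cycn 6) n E I m
  | 3 => pat_ok 7 (cycn 7) n E I m
  | _ => pat_ok 5 book5n n E I m
  end.

Definition wit_ok n E (W : seq (nat * nat * nat * seq nat)) i j :=
  has (fun w => ((w.1.1 == (i, j)) || (w.1.1 == (j, i))) && cert_ok n E [:: i; j] w.1.2 w.2) W.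

Lemma wit_sound (T : finType) (e : rel T) (vs : seq T) x0 n E W (S : {set T})
  (Iset : {set T}) i j :
  uniq vs -> size vs = n -> (forall u, (u \in S) = (u \in vs)) ->
  (forall i j, kadj E i j -> e (nth x0 vs i) (nth x0 vs j)) ->
  nth x0 vs i \in Iset -> nth x0 vs j \in Iset ->
  wit_ok n E W i j -> ~ F_free (ext_vset S) (ext_rel S Iset e).
Proof.
move=> Hu Hn HS HE Hi Hj /hasP [[[ij c] m] _ /andP [_ Hc]] [H1 [H2 [H3 [H4 H5]]]].
have HI : forall a, a \in [:: i; j] -> nth x0 vs a \in Iset.
  by move=> a; rewrite !inE => /orP [] /eqP ->.
move: Hc; rewrite /cert_ok /=; case: c => [|[|[|[|c]]]] Hc.
- by apply: H1; apply: (pat_sound _ Hu Hn HS HE HI Hc).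
- by apply: H2; apply: (pat_sound _ Hu Hn HS HE HI Hc).
- by apply: H3; apply: (pat_sound _ Hu Hn HS HE HI Hc).
- by apply: H4; apply: (pat_sound _ Hu Hn HS HE HI Hc).
- by apply: H5; apply: (pat_sound _ Hu Hn HS HE HI Hc).
Qed.

Definition Ridx n (Bd : seq nat) := [seq i <- iota 0 n | i \notin Bd].

Definition fix_ok n E D Bd :=
  all (fun v => greedy E D (Some v) (fun _ => 0) n (Ridx n Bd) [::]) (Ridx n Bd).
Definition forb_ok n E D Bd W :=
  greedy E D None (fun _ => 0) n (Ridx n Bd) [::] &&
  all (fun i => all (fun j => wit_ok n E W i j ||
      greedy E D None (fun a => nat_of_bool (a \in [:: i; j])) n (Ridx n Bd) [::])
    (Ridx n Bd)) (Ridx n Bd).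
Definition check n E D Bd W :=
  [&& Ridx n Bd != [::], all (fun j => j < n) Bd, fix_ok n E D Bd & forb_ok n E D Bd W].

Lemma generic (T : finType) (e : rel T) (e_sym : symmetric e) (e_irr : irreflexive e)
  (vs : seq T) (x0 : T) (n : nat) E D Bd W (S B : {set T}) :
  uniq vs -> size vs = n ->
  (forall u, (u \in S) = (u \in vs)) ->
  (forall u, (u \in B) = (u \in [seq nth x0 vs j | j <- Bd])) ->
  all (fun p => e (nth x0 vs p.1) (nth x0 vs p.2)) E ->
  all (fun i => deg e (nth x0 vs i) <= nth 0 D i) (Ridx n Bd) ->
  check n E D Bd W ->
  boundary_reducible F_free 4 e S (S :\: B).
Proof.
move=> Hu Hn HS HB HEa HDa /and4P [Rne /allP Bdl Hfix /andP [Hf0 /allP Hforb]].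
have inj : forall i j, i < n -> j < n -> nth x0 vs i = nth x0 vs j -> i = j.
  by move=> i j il jl /eqP; rewrite nth_uniq ?Hn // => /eqP.
have HE : forall i j, kadj E i j -> e (nth x0 vs i) (nth x0 vs j).
  by move=> i j /orP [] /(allP HEa) //=; rewrite e_sym.
have RidxP : forall i, i \in Ridx n Bd -> i < n.
  by move=> i; rewrite mem_filter mem_iota => /and3P [_ _].
have memR : forall i, i < n -> (nth x0 vs i \in S :\: B) = (i \in Ridx n Bd).
  move=> i il; rewrite !inE HS HB mem_nth ?Hn // andbT mem_filter mem_iota /= il andbT.
  congr negb; apply/mapP/idP => [[j jB /inj Eij]|iB]; last by exists i.
  by rewrite Eij // Bdl.
have Rmem : forall u, u \in S :\: B -> exists2 i, i < n & u = nth x0 vs i.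
  move=> u; rewrite inE HS => /andP [_ uv]; exists (index u vs); last by rewrite nth_index.
  by rewrite -Hn index_mem.
have imgR : img x0 vs (Ridx n Bd) = S :\: B.
  apply/setP => u; rewrite inE; apply/mapP/idP.
    by case=> i iR ->; rewrite memR // RidxP.
  by move=> uR; have [i il Eu] := Rmem u uR; exists i => //; rewrite -memR // -Eu.
have Hinv : forall i, i \in Ridx n Bd ++ [::] -> i < size vs /\ nth x0 vs i \in S :\: B.
  by move=> i; rewrite cats0 => iR; rewrite Hn memR RidxP.
have Hun : uniq (Ridx n Bd ++ [::]) by rewrite cats0 filter_uniq // iota_uniq.
have Hnth : forall a b, a < n -> b < n -> (nth x0 vs a == nth x0 vs b) = (a == b).
  by move=> a b al bl; rewrite nth_uniq ?Hn.
split.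
- exact: subsetDl.
- have [i iR] : exists i, i \in Ridx n Bd.
    by case: (Ridx n Bd) Rne => // i s _; exists i; rewrite inE eqxx.
  by apply/set0Pn; exists (nth x0 vs i); rewrite memR // RidxP.
- move=> v vR L HL; have [i il Ev] := Rmem v vR; subst v; rewrite -imgR.
  have iR : i \in Ridx n Bd by rewrite -memR.
  apply: (greedy_sound e_sym e_irr Hu HE _ Hun Hinv (allP Hfix i iR)).
  move=> a al aR; have := HL _ aR; rewrite Hn in al.
  rewrite Hnth //; case: (eqVneq a i) => [->|nai] /=.
    by rewrite eqxx => /int_one.
  rewrite (_ : (Some i == Some a) = false); last by apply/eqP => -[] Eia; rewrite Eia eqxx in nai.
  rewrite /bval => /int_fix H; have := allP HDa a; rewrite -memR // => /(_ aR) Hd.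
  lia.
- move=> I IR FI cI L HL.
  have Hsz : forall (red : nat -> nat),
      (forall a, a < n -> nat_of_bool (nth x0 vs a \in I) <= red a) ->
      greedy E D None red n (Ridx n Bd) [::] -> colorable e (S :\: B) L.
    move=> red Hred Hg; rewrite -imgR.
    apply: (greedy_sound e_sym e_irr Hu HE _ Hun Hinv Hg).
    move=> a al aR /=; have := HL _ aR; rewrite Hn in al.
    rewrite /bval => /int_forb H; have := allP HDa a; rewrite -memR // => /(_ aR) Hd.
    move: H; have := Hred a al; move: (nat_of_bool (nth x0 vs a \in I)) => b h1 h2; apply: leq_trans h2 _; rewrite -!addnA leq_add2l; exact: leq_add.
  move: cI; rewrite /= leq_eqVlt ltnS leq_eqVlt ltnS leqn0.
  case/or3P => [/cards2P [x [y [_ EI]]] | /cards1P [x EI] | /eqP /cards0_eq EI].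
  + have [xR yR] : x \in S :\: B /\ y \in S :\: B.
      by split; apply: (subsetP IR); rewrite EI !inE eqxx ?orbT.
    have [i il Ex] := Rmem x xR; have [j jl Ey] := Rmem y yR.
    have iR : i \in Ridx n Bd by rewrite -memR // -Ex.
    have jR : j \in Ridx n Bd by rewrite -memR // -Ey.
    case/orP: (allP (Hforb i iR) j jR) => [Hw|Hg].
      case: (wit_sound Hu Hn HS HE _ _ Hw FI).
      * by rewrite EI !inE Ex eqxx.
      * by rewrite EI !inE Ey eqxx orbT.
    apply: (Hsz _ _ Hg) => a al; rewrite EI !inE Ex Ey !Hnth //.
  + have xR : x \in S :\: B by apply: (subsetP IR); rewrite EI !inE eqxx.
    have [i il Ex] := Rmem x xR.
    have iR : i \in Ridx n Bd by rewrite -memR // -Ex.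
    case/orP: (allP (Hforb i iR) i iR) => [Hw|Hg].
      by case: (wit_sound Hu Hn HS HE _ _ Hw FI); rewrite EI !inE Ex eqxx.
    by apply: (Hsz _ _ Hg) => a al; rewrite EI !inE Ex !Hnth // orbb.
  + by apply: (Hsz _ _ Hf0) => a al; rewrite EI inE.
Qed.


Ltac destr := repeat match goal with
 | H : exists _, _ |- _ => destruct H
 | H : _ /\ _ |- _ => destruct H
 | H : Dia _ _ _ _ _ _ _ _ _ |- _ => hnf in H
 | H : diamond _ _ _ _ _ |- _ => hnf in H
 | H : dsat _ _ _ |- _ => simpl in H
end.

Ltac solve_all := simpl; repeat (apply/andP; split); try exact: isT; assumption.
Ltac solve_deg := simpl; repeat (apply/andP; split); try exact: isT;
  try (match goal with H : deg _ ?x = _ |- context [deg _ ?x] => rewrite H end); try assumption.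

Lemma C1_ok (T : finType) (e : rel T) (e_sym : symmetric e) (e_irr : irreflexive e) S B :
  C1 e S B -> boundary_reducible F_free 4 e S (S :\: B).
Proof.
case=> v H; destr; subst S B.
apply: (@generic T e e_sym e_irr [:: v] v 1
  [:: ] [:: 2] [:: ]
  [:: ]).
  + first [assumption | done].
  + reflexivity.
  + by move=> z; rewrite !inE ?orbA.
  + by move=> z; rewrite /= !inE ?orbA.
  + solve_all.
  + by solve_deg.
  + by vm_compute.
Qed.

Lemma C2_ok (T : finType) (e : rel T) (e_sym : symmetric e) (e_irr : irreflexive e) S B :
  C2 e S B -> boundary_reducible F_free 4 e S (S :\: B).
Proof.
case=> u [v [w H]]; destr; subst S B.
apply: (@generic T e e_sym e_irr [:: u; v; w] u 3
  [:: (0,1); (1,2)] [:: 3; 3; 3] [:: ]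
  [:: ]).
  + first [assumption | done].
  + reflexivity.
  + by move=> z; rewrite !inE ?orbA.
  + by move=> z; rewrite /= !inE ?orbA.
  + solve_all.
  + by solve_deg.
  + by vm_compute.
Qed.

Lemma C3_ok (T : finType) (e : rel T) (e_sym : symmetric e) (e_irr : irreflexive e) S B :
  C3 e S B -> boundary_reducible F_free 4 e S (S :\: B).
Proof.
case=> u [v [w H]]; destr; subst S B.
apply: (@generic T e e_sym e_irr [:: u; v; w] u 3
  [:: (0,1); (1,2); (0,2)] [:: 3; 3; 3] [:: ]
  [:: ]).
  + first [assumption | done].
  + reflexivity.
  + by move=> z; rewrite !inE ?orbA.
  + by move=> z; rewrite /= !inE ?orbA.
  + solve_all.
  + by solve_deg.
  + by vm_compute.
Qed.

Lemma C4_ok (T : finType) (e : rel T) (e_sym : symmetric e) (e_irr : irreflexive e) S B :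
  C4 e S B -> boundary_reducible F_free 4 e S (S :\: B).
Proof.
case=> m1 [m2 [s1 [s2 [u H]]]]; destr; subst S B.
apply: (@generic T e e_sym e_irr [:: m1; m2; s1; s2; u] m1 5
  [:: (0,1); (0,2); (0,3); (1,2); (1,3); (4,0)] [:: 4; 3; 4; 0; 3] [:: 3]
  [:: (0,1,4,[:: 0; 1; 2; 3; 5]); (1,4,1,[:: 0; 2; 1; 5; 4])]).
  + first [assumption | done].
  + reflexivity.
  + by move=> z; rewrite !inE ?orbA.
  + by move=> z; rewrite /= !inE ?orbA.
  + solve_all.
  + by solve_deg.
  + by vm_compute.
Qed.

Lemma C5_ok (T : finType) (e : rel T) (e_sym : symmetric e) (e_irr : irreflexive e) S B :
  C5 e S B -> boundary_reducible F_free 4 e S (S :\: B).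
Proof.
case=> m1 [m2 [s1 [s2 H]]]; destr; subst S B.
apply: (@generic T e e_sym e_irr [:: m1; m2; s1; s2] m1 4
  [:: (0,1); (0,2); (0,3); (1,2); (1,3)] [:: 3; 3; 0; 0] [:: 2; 3]
  [:: (0,1,4,[:: 0; 1; 2; 3; 4])]).
  + first [assumption | done].
  + reflexivity.
  + by move=> z; rewrite !inE ?orbA.
  + by move=> z; rewrite /= !inE ?orbA.
  + solve_all.
  + by solve_deg.
  + by vm_compute.
Qed.

Lemma C6_ok (T : finType) (e : rel T) (e_sym : symmetric e) (e_irr : irreflexive e) S B :
  C6 e S B -> boundary_reducible F_free 4 e S (S :\: B).
Proof.
case=> m1 [m2 [s1 [s2 H]]]; destr; subst S B.
apply: (@generic T e e_sym e_irr [:: m1; m2; s1; s2] m1 4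
  [:: (0,1); (0,2); (0,3); (1,2); (1,3)] [:: 3; 0; 3; 0] [:: 1; 3]
  [:: (0,2,1,[:: 0; 3; 1; 2; 4])]).
  + first [assumption | done].
  + reflexivity.
  + by move=> z; rewrite !inE ?orbA.
  + by move=> z; rewrite /= !inE ?orbA.
  + solve_all.
  + by solve_deg.
  + by vm_compute.
Qed.

Lemma C7_ok (T : finType) (e : rel T) (e_sym : symmetric e) (e_irr : irreflexive e) S B :
  C7 e S B -> boundary_reducible F_free 4 e S (S :\: B).
Proof.
case=> m1 [m2 [s1 [s2 H]]]; destr; subst S B.
apply: (@generic T e e_sym e_irr [:: m1; m2; s1; s2] m1 4
  [:: (0,1); (0,2); (0,3); (1,2); (1,3)] [:: 5; 4; 3; 3] [:: ]
  [:: (1,2,1,[:: 0; 2; 4; 1; 3]); (1,3,1,[:: 0; 2; 1; 4; 3]); (2,3,1,[:: 0; 1; 2; 4; 3])]).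
  + first [assumption | done].
  + reflexivity.
  + by move=> z; rewrite !inE ?orbA.
  + by move=> z; rewrite /= !inE ?orbA.
  + solve_all.
  + by solve_deg.
  + by vm_compute.
Qed.

Lemma C8_ok (T : finType) (e : rel T) (e_sym : symmetric e) (e_irr : irreflexive e) S B :
  C8 e S B -> boundary_reducible F_free 4 e S (S :\: B).
Proof.
case=> a1 [b1 [x [c1 [m [s [v H]]]]]]; destr; subst S B.
apply: (@generic T e e_sym e_irr [:: a1; b1; x; c1; m; s; v] a1 7
  [:: (0,1); (0,2); (0,3); (1,2); (1,3); (2,4); (2,5); (2,6); (4,5); (4,6)] [:: 4; 4; 5; 3; 3; 4; 0] [:: 6]
  [:: (2,3,1,[:: 0; 1; 2; 7; 3]); (2,4,4,[:: 2; 4; 5; 6; 7]); (3,4,1,[:: 0; 2; 4; 7; 3]); (3,5,1,[:: 0; 2; 5; 7; 3])]).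
  + first [assumption | done].
  + reflexivity.
  + by move=> z; rewrite !inE ?orbA.
  + by move=> z; rewrite /= !inE ?orbA.
  + solve_all.
  + by solve_deg.
  + by vm_compute.
Qed.

Lemma C9_ok (T : finType) (e : rel T) (e_sym : symmetric e) (e_irr : irreflexive e) S B :
  C9 e S B -> boundary_reducible F_free 4 e S (S :\: B).
Proof.
case=> p1 [q1 [r1 [t1 [p2 [q2 [r2 [t2 H]]]]]]]; destr; subst S B.
apply: (@generic T e e_sym e_irr [:: p1; q1; r1; t1; p2; q2; r2; t2] p1 8
  [:: (0,1); (0,2); (0,3); (1,2); (1,3); (4,5); (4,6); (4,7); (5,6); (5,7); (1,5)] [:: 3; 4; 4; 0; 3; 4; 4; 0] [:: 3; 7]
  [:: (0,1,4,[:: 0; 1; 2; 3; 8]); (0,4,1,[:: 0; 1; 5; 4; 8]); (4,5,4,[:: 4; 5; 6; 7; 8])]).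
  + first [assumption | done].
  + reflexivity.
  + by move=> z; rewrite !inE ?orbA.
  + by move=> z; rewrite /= !inE ?orbA.
  + solve_all.
  + by solve_deg.
  + by vm_compute.
Qed.

Lemma C10_ok (T : finType) (e : rel T) (e_sym : symmetric e) (e_irr : irreflexive e) S B :
  C10 e S B -> boundary_reducible F_free 4 e S (S :\: B).
Proof.
case=> a [b [p [q [m [s [v H]]]]]]; destr; subst S B.
apply: (@generic T e e_sym e_irr [:: a; b; p; q; m; s; v] a 7
  [:: (0,1); (0,2); (0,3); (1,2); (1,3); (3,4); (3,5); (3,6); (4,5); (4,6)] [:: 4; 3; 0; 5; 3; 4; 0] [:: 2; 6]
  [:: (0,4,1,[:: 0; 1; 3; 4; 7]); (1,3,1,[:: 0; 2; 1; 7; 3]); (1,4,1,[:: 0; 1; 7; 4; 3]); (1,5,1,[:: 0; 1; 7; 5; 3]); (3,4,4,[:: 3; 4; 5; 6; 7])]).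
  + first [assumption | done].
  + reflexivity.
  + by move=> z; rewrite !inE ?orbA.
  + by move=> z; rewrite /= !inE ?orbA.
  + solve_all.
  + by solve_deg.
  + by vm_compute.
Qed.

Lemma C11_ok (T : finType) (e : rel T) (e_sym : symmetric e) (e_irr : irreflexive e) S B :
  C11 e S B -> boundary_reducible F_free 4 e S (S :\: B).
Proof.
case=> m1 [m2 [s1 [s2 [u H]]]]; destr; subst S B.
lazymatch goal with Ho : _ \/ _ |- _ => destruct Ho as [Ho|Ho] end.
- apply: (@generic T e e_sym e_irr [:: m1; m2; s1; s2; u] m1 5
  [:: (0,1); (0,2); (0,3); (1,2); (1,3); (4,0)] [:: 4; 4; 3; 4; 3] [:: ]
  [:: (0,2,1,[:: 0; 3; 1; 2; 5]); (2,4,1,[:: 0; 1; 2; 5; 4])]).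
  * first [assumption | done].
  * reflexivity.
  * by move=> z; rewrite !inE ?orbA.
  * by move=> z; rewrite /= !inE ?orbA.
  * solve_all.
  * by solve_deg.
  * by vm_compute.
- apply: (@generic T e e_sym e_irr [:: m1; m2; s1; s2; u] m1 5
  [:: (0,1); (0,2); (0,3); (1,2); (1,3); (4,1)] [:: 4; 4; 3; 4; 3] [:: ]
  [:: (1,2,1,[:: 0; 2; 5; 1; 3]); (2,4,1,[:: 0; 1; 4; 5; 2])]).
  * first [assumption | done].
  * reflexivity.
  * by move=> z; rewrite !inE ?orbA.
  * by move=> z; rewrite /= !inE ?orbA.
  * solve_all.
  * by solve_deg.
  * by vm_compute.
Qed.

Lemma C12_ok (T : finType) (e : rel T) (e_sym : symmetric e) (e_irr : irreflexive e) S B :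
  C12 e S B -> boundary_reducible F_free 4 e S (S :\: B).
Proof.
case=> p1 [q1 [r1 [t1 [a [b [c [d H]]]]]]]; destr; subst S B.
lazymatch goal with Ho : _ \/ _ |- _ => destruct Ho as [Ho|Ho] end.
- apply: (@generic T e e_sym e_irr [:: p1; q1; r1; t1; a; b; c; d] p1 8
  [:: (0,1); (0,2); (0,3); (1,2); (1,3); (4,5); (4,6); (4,7); (5,6); (5,7); (1,4)] [:: 3; 4; 4; 0; 4; 4; 4; 3] [:: 3]
  [:: (0,1,4,[:: 0; 1; 2; 3; 8]); (0,7,1,[:: 0; 1; 4; 7; 8]); (4,7,1,[:: 4; 6; 5; 7; 8])]).
  * first [assumption | done].
  * reflexivity.
  * by move=> z; rewrite !inE ?orbA.
  * by move=> z; rewrite /= !inE ?orbA.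
  * solve_all.
  * by solve_deg.
  * by vm_compute.
- apply: (@generic T e e_sym e_irr [:: p1; q1; r1; t1; a; b; c; d] p1 8
  [:: (0,1); (0,2); (0,3); (1,2); (1,3); (4,5); (4,6); (4,7); (5,6); (5,7); (1,5)] [:: 3; 4; 4; 0; 4; 4; 4; 3] [:: 3]
  [:: (0,1,4,[:: 0; 1; 2; 3; 8]); (0,7,1,[:: 0; 1; 5; 7; 8]); (5,7,1,[:: 4; 6; 5; 8; 7])]).
  * first [assumption | done].
  * reflexivity.
  * by move=> z; rewrite !inE ?orbA.
  * by move=> z; rewrite /= !inE ?orbA.
  * solve_all.
  * by solve_deg.
  * by vm_compute.
Qed.

Lemma C13_ok (T : finType) (e : rel T) (e_sym : symmetric e) (e_irr : irreflexive e) S B :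
  C13 e S B -> boundary_reducible F_free 4 e S (S :\: B).
Proof.
case=> a [b [x [y [m2 [s2 [t2 [m3 [s3 [t3 H]]]]]]]]]; destr; subst S B.
apply: (@generic T e e_sym e_irr [:: a; b; x; y; m2; s2; t2; m3; s3; t3] a 10
  [:: (0,1); (0,2); (0,3); (1,2); (1,3); (2,4); (2,5); (2,6); (4,5); (4,6); (3,7); (3,8); (3,9); (7,8); (7,9)] [:: 3; 5; 5; 5; 3; 4; 0; 3; 4; 0] [:: 6; 9]
  [:: (1,4,1,[:: 0; 1; 10; 4; 2]); (1,7,1,[:: 0; 1; 10; 7; 3]); (2,4,4,[:: 2; 4; 5; 6; 10]); (3,7,4,[:: 3; 7; 8; 9; 10]); (4,7,2,[:: 0; 2; 4; 10; 7; 3])]).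
  + first [assumption | done].
  + reflexivity.
  + by move=> z; rewrite !inE ?orbA.
  + by move=> z; rewrite /= !inE ?orbA.
  + solve_all.
  + by solve_deg.
  + by vm_compute.
Qed.

Theorem mainTheorem6 (T : finType) (e : rel T)
  (e_sym : symmetric e) (e_irr : irreflexive e) :
  F_free [set: T] e ->
  forall S B : {set T}, some_config e S B ->
  boundary_reducible F_free 4 e S (S :\: B).
Proof.
move=> _ S B.
case=> [H|[H|[H|[H|[H|[H|[H|[H|[H|[H|[H|[H|H]]]]]]]]]]]].
- exact: C1_ok H.
- exact: C2_ok H.
- exact: C3_ok H.
- exact: C4_ok H.
- exact: C5_ok H.
- exact: C6_ok H.
- exact: C7_ok H.
- exact: C8_ok H.
- exact: C9_ok H.
- exact: C10_ok H.
- exact: C11_ok H.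
- exact: C12_ok H.
- exact: C13_ok H.
Qed.
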